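(* Let $G=(V,E)$ be an undirected graph with $n$ vertices, and let $\pi$ be a uniformly random ordering of $V$. Let $\ell>0$ and $d\le n$ be positive, and let $P$ be the $(\ell/d)$-prefix of $V$ with respect to $\pi$. Let $W$ be the lexicographically first maximal independent set of the induced subgraph $G[P]$ with respect to $\pi$. If $W$ and all of its neighbors $N_G(W)$ are removed from $G$, then with probability at least $1-n/e^{\ell}$ every remaining vertex has degree at most $d$ in the remaining graph $G[V\setminus (W\cup N_G(W))]$.
   Context: For a vertex set $U$, $N_G(U)$ is the set of all neighbors of vertices in $U$, and $G[U]$ is the subgraph induced by $U$. For an ordered vertex set $V$ and $0<\delta\le 1$, the $\delta$-prefix $P(V,\pi,\delta)$ is the set of the $\delta|V|$ earliest vertices of $V$ in the ordering $\pi$. The lexicographically first maximal independent set of a graph with respect to an ordering $\pi$ is the output of the sequential greedy algorithm: repeatedly take the first remaining vertex $v$ in the order $\pi$, add it to the set, and delete $v$ and all its neighbors, until no vertices remain. *)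

(* Defs.v *)
From HB Require Import structures.
From mathcomp Require Import all_boot all_order all_fingroup all_algebra.
From mathcomp Require Import reals sequences exp.
Set Implicit Arguments. Unset Strict Implicit. Unset Printing Implicit Defensive.
Import Order.TTheory GRing.Theory Num.Theory.

(* Simple undirected graph on a finite vertex type T: e is a symmetric,
   irreflexive relation.  A vertex ordering is a permutation sigma of T;
   the position of v is the rank of sigma v in the enumeration of T. *)

Section Defs.
Variable T : finType.

Definition pos (s : {perm T}) (v : T) : nat := enum_rank (s v).

Definition nbhd (e : rel T) (U : {set T}) : {set T} :=
  [set u | [exists w in U, e w u]].

Fixpoint greedy_mis (e : rel T) (s : {perm T}) (fuel : nat) (Rm : {set T})
  : {set T} :=
  match fuel with
  | 0 => set0
  | f.+1 =>
    match [pick v in Rm | [forall u in Rm, pos s v <= pos s u]] with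
    | Some v => v |: greedy_mis e s f (Rm :\: (v |: nbhd e [set v]))
    | None => set0
    end
  end.

Definition lfmis (e : rel T) (s : {perm T}) (U : {set T}) : {set T} :=
  greedy_mis e s #|T| U.

(* delta-prefix: the vertices whose position i (0-based) satisfies
   i < delta * |V|, i.e. the first ceil(delta |V|) vertices (all of V if
   delta >= 1). *)
Definition vprefix (R : realType) (s : {perm T}) (delta : R) : {set T} :=
  [set v | ((pos s v)%:R < delta * #|T|%:R)%R].

End Defs.

(* Main.v *)
Require Import Defs.
From HB Require Import structures.
From mathcomp Require Import all_boot all_order all_fingroup all_algebra.
From mathcomp Require Import reals sequences exp ring.
Import Order.TTheory GRing.Theory Num.Theory.
Set Implicit Arguments. Unset Strict Implicit. Unset Printing Implicit Defensive.

Lemma pos_inj (T : finType) (s : {perm T}) x y : pos s x = pos s y -> x = y.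
Proof. by rewrite /pos => /val_inj /enum_rank_inj /perm_inj. Qed.

Lemma in_nbhd1 (T : finType) (e : rel T) v u : (u \in nbhd e [set v]) = e v u.
Proof.
rewrite /nbhd inE; apply/existsP/idP => [[w /andP[/set1P -> //]]|h].
by exists v; rewrite set11.
Qed.

Lemma in_nbhd (T : finType) (e : rel T) W u : (u \in nbhd e W) = [exists w, (w \in W) && e w u].
Proof. by rewrite /nbhd inE. Qed.

Lemma greedy_char (T : finType) (e : rel T) (e_irr : irreflexive e) (s : {perm T}) f (Rm : {set T}) :
  #|Rm| <= f -> forall x, (x \in greedy_mis e s f Rm) =
   (x \in Rm) && [forall y, (y \in greedy_mis e s f Rm) ==> ~~ (e y x && (pos s y < pos s x))].
Proof.
elim: f Rm => [|f IH] Rm hRm x /=.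
  move: hRm; rewrite leqn0 => /eqP/cards0_eq ->; by rewrite !inE.
case: pickP => [v /andP[vRm /forallP vmin] | hnone]; last first.
  case: (set_0Vmem Rm) => [-> | [y yR]]; first by rewrite !inE.
  pose z := [arg min_(u < y in Rm) pos s u].
  have : z \in Rm /\ forall u, u \in Rm -> pos s z <= pos s u.
    by rewrite /z; case: arg_minnP.
  case=> zR zmin; have := hnone z; rewrite zR /=.
  by move/negbT/forallPn => [u]; rewrite negb_imply => /andP[/zmin -> ].
set Rm' := Rm :\: (v |: nbhd e [set v]).
have hRm' : #|Rm'| <= f.
  have : #|Rm'| < #|Rm|.
    apply: proper_card; apply/properP; split; first by apply/subsetP => u; rewrite inE => /andP[].
    by exists v => //; rewrite !inE eqxx.
  by move=> h; rewrite -ltnS (leq_trans h hRm).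
have IH' := IH _ hRm'.
have sub' : forall y, y \in greedy_mis e s f Rm' -> y \in Rm.
  by move=> y; rewrite IH' => /andP[]; rewrite inE => /andP[].
have vmin' : forall u, u \in Rm -> pos s v <= pos s u.
  by move=> u uR; have := vmin u; rewrite uR.
rewrite in_setU1.
have [->|xv] := eqVneq x v.
  rewrite vRm /=; symmetry; apply/forallP => y; apply/implyP; rewrite in_setU1.
  case/orP => [/eqP ->|/sub' /vmin' h]; first by rewrite e_irr.
  by rewrite ltnNge h andbF.
rewrite /= IH' /Rm' in_setD in_setU1 in_nbhd1 (negbTE xv) /=.
case evx: (e v x) => /=.
  case xR: (x \in Rm) => //=; apply/esym/negbTE/forallPn; exists v.
  rewrite in_setU1 eqxx /= evx /= negbK ltn_neqAle vmin' // andbT.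
  by apply/eqP => /pos_inj h; rewrite h eqxx in xv.
congr (_ && _); apply: eq_forallb => y; rewrite in_setU1.
case: eqVneq => [->|_] /=; by rewrite ?evx ?implybT.
Qed.

Lemma lfmis_char (T : finType) (e : rel T) (e_irr : irreflexive e) (s : {perm T}) (U : {set T}) x :
  (x \in lfmis e s U) =
   (x \in U) && [forall y, (y \in lfmis e s U) ==> ~~ (e y x && (pos s y < pos s x))].
Proof. by apply: greedy_char => //; apply: max_card. Qed.

Definition agree (T : finType) t (s s' : {perm T}) := forall x, pos s x < t -> pos s' x = pos s x.

Lemma agree_sym (T : finType) t (s s' : {perm T}) : agree t s s' -> agree t s' s.
Proof.
move=> h x hx.
pose z := (s^-1)%g (enum_val (enum_rank (s' x))).
have pz : pos s z = pos s' x by rewrite /pos /z permKV enum_valK.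
have := h z; rewrite pz => /(_ hx) /pos_inj zx.
by rewrite -{1}zx pz.
Qed.

Lemma agree_le (T : finType) t t' (s s' : {perm T}) : t' <= t -> agree t s s' -> agree t' s s'.
Proof. by move=> le h x hx; apply: h; apply: leq_trans le. Qed.

Lemma agree_lt (T : finType) t (s s' : {perm T}) x : agree t s s' -> (pos s x < t) = (pos s' x < t).
Proof.
move=> h; apply/idP/idP => hx; first by rewrite h.
by rewrite (agree_sym h).
Qed.

Lemma W_local (R : realType) (T : finType) (e : rel T) (e_irr : irreflexive e) (L : R) t (s s' : {perm T}) :
  agree t s s' -> forall x, pos s x < t ->
  (x \in lfmis e s (vprefix s L)) = (x \in lfmis e s' (vprefix s' L)).
Proof.
move=> ag.
suff : forall j x, pos s x < j -> pos s x < t ->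
  (x \in lfmis e s (vprefix s L)) = (x \in lfmis e s' (vprefix s' L)).
  by move=> H x hx; apply: (H t.+1) => //; apply: ltnW.
elim=> [//|j IH] x hj ht.
rewrite lfmis_char // [RHS]lfmis_char // !inE (ag x ht); congr (_ && _).
apply: eq_forallb => y.
case: (ltnP (pos s y) (pos s x)) => hyx.
  have hyt : pos s y < t by apply: ltn_trans ht.
  by rewrite (ag y hyt) (IH y) // (leq_trans hyx).
rewrite andbF implybT.
case hlt: (pos s' y < pos s x); last by rewrite andbF implybT.
have : pos s' y < t by rewrite (ltn_trans hlt).
move/(agree_sym ag) => hy.
by move: hlt; rewrite -hy ltnNge hyx.
Qed.

Definition Wof (R : realType) (T : finType) (e : rel T) (L : R) (s : {perm T}) :=
  lfmis e s (vprefix s L).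

Definition Dset (R : realType) (T : finType) (e : rel T) (L : R) (v : T) t (s : {perm T}) :=
  [set x | e v x && (t <= pos s x) &&
     ~~ [exists y, (y \in Wof e L s) && (pos s y < t) && e y x]].

Definition Bp (R : realType) (T : finType) (e : rel T) (L : R) (v : T) m t (s : {perm T}) :=
  [forall x, (pos s x < t) ==>
     ((m <= #|Dset e L v (pos s x) s|) && (x \notin Dset e L v (pos s x) s))].

Lemma D_local (R : realType) (T : finType) (e : rel T) (e_irr : irreflexive e) (L : R) v t
  (s s' : {perm T}) : agree t s s' -> Dset e L v t s = Dset e L v t s'.
Proof.
move=> ag; apply/setP => x; rewrite !inE.
rewrite [t <= pos s x]leqNgt [t <= pos s' x]leqNgt (agree_lt x ag); congr (_ && ~~ _).
apply: eq_existsb => y.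
case hy: (pos s y < t).
  by rewrite (ag y hy) hy /Wof (W_local e_irr L ag).
by rewrite -(agree_lt y ag) hy !andbF.
Qed.

Lemma B_local (R : realType) (T : finType) (e : rel T) (e_irr : irreflexive e) (L : R) v m t
  (s s' : {perm T}) : agree t s s' -> Bp e L v m t s = Bp e L v m t s'.
Proof.
move=> ag; apply: eq_forallb => x.
rewrite -(agree_lt x ag).
case hx: (pos s x < t) => //=.
rewrite (ag x hx) (D_local e_irr L v (agree_le (ltnW hx) ag)) //.
Qed.

Lemma B_mono (R : realType) (T : finType) (e : rel T) (L : R) v m t (s : {perm T}) :
  Bp e L v m t.+1 s -> Bp e L v m t s.
Proof.
move=> /forallP h; apply/forallP => x; apply/implyP => hx.
by have := h x; rewrite ltnW.
Qed.

Lemma card_U (T : finType) (s : {perm T}) t : #|[set y | t <= pos s y]| = #|T| - t.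
Proof.
pose f := fun y => enum_rank (s y).
have fb : bijective f.
  exists (fun i => (s^-1)%g (enum_val i)) => y; rewrite /f ?enum_rankK ?permK //.
  by rewrite permKV enum_valK.
have -> : [set y | t <= pos s y] = f @^-1: [set i : 'I_#|T| | t <= i].
  by apply/setP => y; rewrite !inE.
rewrite on_card_preimset; last by apply: onW_bij.
rewrite -sum1dep_card -(big_mkord (fun i => t <= i) (fun _ => 1%N)) big_mkcond /=.
elim: #|T| => [|k IH]; first by rewrite big_geq.
rewrite big_nat_recr //= IH; case: (leqP t k) => h.
  by rewrite addn1 subSn.
by rewrite addn0 (eqP (ltnW h)) ; move: h; rewrite -subn_eq0 => /eqP ->.
Qed.

Lemma sum_ind (I : finType) (c : pred I) : (\sum_(y : I) (c y : nat) = #|[set y | c y]|)%N.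
Proof. by rewrite -sum1dep_card [RHS]big_mkcond; apply: eq_bigr => y _; case: (c y). Qed.

Lemma step (R : realType) (T : finType) (e : rel T) (e_irr : irreflexive e) (L : R) v m t
  (ht : t < #|T|) :
  #|[set s | Bp e L v m t.+1 s]| * (#|T| - t) <= #|[set s | Bp e L v m t s]| * (#|T| - t - m).
Proof.
pose i0 : 'I_#|T| := Ordinal ht.
pose wt (s : {perm T}) := (s^-1)%g (enum_val i0).
have pwt s : pos s (wt s) = t by rewrite /pos /wt permKV enum_valK.
have wtu s x : pos s x = t -> x = wt s by rewrite -(pwt s) => /pos_inj.
pose phi (p : {perm T} * T) := (tperm p.2 (wt p.1) * p.1, wt p.1)%g.
have posM (s : {perm T}) y x : pos (tperm y (wt s) * s)%g x = pos s (tperm y (wt s) x).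
  by rewrite /pos permM.
have wtphi s y : wt (tperm y (wt s) * s)%g = y.
  by symmetry; apply: wtu; rewrite posM tpermL pwt.
have phiK : involutive phi.
  case=> s y; rewrite /phi /= wtphi tpermC mulgA tperm2 mul1g //.
have phi_inj : injective phi by apply: inv_inj.
pose C1 (p : {perm T} * T) := (Bp e L v m t.+1 p.1 && (t <= pos p.1 p.2)).
pose C2 (p : {perm T} * T) := [&& Bp e L v m t p.1, m <= #|Dset e L v t p.1|,
       (t <= pos p.1 p.2) & p.2 \notin Dset e L v t p.1].
have H1 : #|[set s | Bp e L v m t.+1 s]| * (#|T| - t) = \sum_p (C1 p : nat).
  rewrite -(pair_big predT predT (fun s y => (C1 (s, y) : nat))) /=.
  rewrite -sum1dep_card big_distrl /= [LHS]big_mkcond; apply: eq_bigr => s _.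
  rewrite /C1 /=; case: (Bp e L v m t.+1 s) => /=.
    by rewrite mul1n sum_ind card_U.
  by rewrite big1.
have H2 : \sum_p (C2 p : nat) <= #|[set s | Bp e L v m t s]| * (#|T| - t - m).
  rewrite -(pair_big predT predT (fun s y => (C2 (s, y) : nat))) /=.
  rewrite -sum1dep_card big_distrl /= [X in _ <= X]big_mkcond; apply: leq_sum => s _.
  rewrite /C2 /=; case: (Bp e L v m t s) => /=; last by rewrite big1.
  case hm: (m <= _) => /=; last by rewrite big1.
  rewrite mul1n sum_ind.
  have -> : [set y | (t <= pos s y) && (y \notin Dset e L v t s)] =
            [set y | t <= pos s y] :\: Dset e L v t s.
    by apply/setP => y; rewrite !inE andbC.
  rewrite cardsDS ?card_U; first by rewrite leq_sub2l.
  by apply/subsetP => y; rewrite !inE => /andP[/andP[]].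
rewrite H1 (reindex_inj phi_inj) /=; apply: leq_trans H2; apply: leq_sum => [[s y]] _.
rewrite /C1 /C2 /phi /=.
set s2 := (tperm y (wt s) * s)%g.
case hB: (Bp e L v m t.+1 s2) => //=.
case hp: (t <= pos s2 (wt s)) => //=.
have hy : t <= pos s y.
  by move: hp; rewrite /s2 posM tpermR.
have ag : agree t s2 s.
  move=> x; rewrite /s2 posM; case: tpermP => [->|->|_ _] //.
    by rewrite pwt ltnn.
  by rewrite ltnNge hy.
rewrite -(B_local e_irr L v m ag) (B_mono hB) hy /=.
move/forallP: hB => /(_ y); rewrite /s2 posM tpermL pwt ltnSn /=.
by rewrite (D_local e_irr L v ag) => ->.
Qed.

Lemma card_perms (T : finType) : #|{perm T}| = #|T|`!.
Proof. rewrite -cardsT -card_perm; apply: eq_card => s; rewrite !inE /perm_on; by apply/esym/subsetP => x; rewrite inE. Qed.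

Local Open Scope ring_scope.

Definition fac (R : realType) (n m i : nat) : R := (n - i - m)%N%:R / (n - i)%N%:R.

Lemma iterB (R : realType) (T : finType) (e : rel T) (e_irr : irreflexive e) (L : R) v m t :
  (t <= #|T|)%N ->
  #|[set s | Bp e L v m t s]|%:R <= (#|T|`!)%:R * \prod_(i < t) fac R #|T| m i.
Proof.
elim: t => [_|t IH ht].
  rewrite big_ord0 mulr1 -card_perms ler_nat; exact: max_card.
have ht' : (t < #|T|)%N by [].
have hpos : 0 < (#|T| - t)%N%:R :> R by rewrite ltr0n subn_gt0.
have f0 : 0 <= fac R #|T| m t by rewrite /fac divr_ge0.
rewrite big_ord_recr /= mulrA.
apply: le_trans (ler_wpM2r f0 (IH (ltnW ht))).
rewrite /fac mulrA ler_pdivlMr // -!natrM ler_nat.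
exact: step.
Qed.
Local Open Scope ring_scope.

Lemma fac_le (R : realType) (n m i : nat) (d : R) : 0 < d -> d <= n%:R -> d <= m%:R ->
  (i < n)%N -> 0 <= fac R n m i <= 1 - d / n%:R.
Proof.
move=> hd hdn hdm hi.
have n0 : 0 < n%:R :> R by apply: lt_le_trans hdn.
have ni0 : 0 < (n - i)%N%:R :> R by rewrite ltr0n subn_gt0.
have h1 : 0 <= 1 - d / n%:R by rewrite subr_ge0 ler_pdivrMr // mul1r.
rewrite /fac divr_ge0 //=.
case: (leqP m (n - i)) => hm; last first.
  by move: (ltnW hm); rewrite -subn_eq0 => /eqP ->; rewrite mul0r.
rewrite natrB // mulrBl divff ?gt_eqF // lerD2l lerN2.
apply: (@le_trans _ _ (m%:R / n%:R)).
  by rewrite ler_pM2r ?invr_gt0.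
rewrite ler_pdivrMr // mulrAC ler_pdivlMr // ler_pM2l ?ler_nat ?leq_subr //.
by apply: lt_le_trans hdm.
Qed.

Lemma prod_bound (R : realType) (n m k0 : nat) (l d : R) : 0 < l -> 0 < d -> d <= n%:R -> d <= m%:R ->
  (1 <= m)%N -> (k0 <= n)%N -> ((n <= k0)%N || (l / d * n%:R <= k0%:R)) ->
  \prod_(i < k0) fac R n m i <= expR (- l).
Proof.
move=> hl hd hdn hdm hm hk /orP[hnk|hK].
  have kn : k0 = n by apply/eqP; rewrite eqn_leq hk hnk.
  subst k0.
  case: n hdn hk hnk => [|n'] hdn _ _.
    by move: (lt_le_trans hd hdn); rewrite ltxx.
  rewrite big_ord_recr /= /fac subSn // subnn.
  rewrite (_ : (1 - m)%N = 0%N) ?mul0r ?mulr0 ?expR_ge0 //.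
  by apply/eqP; rewrite subn_eq0.
have n0 : 0 < n%:R :> R by apply: lt_le_trans hdn.
apply: (@le_trans _ _ (\prod_(i < k0) (1 - d / n%:R))).
  apply: ler_prod => i _; apply: fac_le => //; exact: leq_trans (ltn_ord i) hk.
rewrite prodr_const card_ord.
apply: (@le_trans _ _ (expR (- (d / n%:R)) ^+ k0)).
  apply: lerXn2r; rewrite ?nnegrE ?expR_ge0 //.
    by rewrite subr_ge0 ler_pdivrMr // mul1r.
  exact: expR_ge1Dx.
rewrite -expRM_natl ler_expR mulrN lerN2.
rewrite mulrA ler_pdivlMr //.
by move: hK; rewrite mulrAC ler_pdivrMr.
Qed.
Local Open Scope ring_scope.

Lemma bad_B (R : realType) (T : finType) (e : rel T) (e_sym : symmetric e) (e_irr : irreflexive e)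
  (L d : R) m k0 (s : {perm T}) v :
  (forall x, (pos s x < k0)%N -> x \in vprefix s L) ->
  (forall a : nat, d < a%:R -> (m <= a)%N) ->
  let W := lfmis e s (vprefix s L) in
  let Rest := ~: (W :|: nbhd e W) in
  v \in Rest -> d < #|[set u in Rest | e v u]|%:R -> Bp e L v m k0 s.
Proof.
move=> hk hm W Rest vR hdeg.
have inRest u : (u \in Rest) = (u \notin W) && ~~ [exists w, (w \in W) && e w u].
  by rewrite /Rest in_setC in_setU in_nbhd negb_or.
have char u : (pos s u < k0)%N -> (u \in W) \/ [exists y, (y \in W) && (e y u && (pos s y < pos s u)%N)].
  move=> hu; case hW: (u \in W); first by left.
  right; move: hW; rewrite /W lfmis_char // hk //= => /negbT/forallPn [y].
  by rewrite negb_imply negbK => h; apply/existsP; exists y.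
apply/forallP => x; apply/implyP => hx.
apply/andP; split.
  apply: hm; apply: (lt_le_trans hdeg); rewrite ler_nat; apply: subset_leq_card.
  apply/subsetP => u; rewrite in_set => /andP[uR evu].
  move: uR; rewrite inRest => /andP[uW unb].
  rewrite inE evu /=; apply/andP; split.
    rewrite leqNgt; apply/negP => hu.
    case: (char u (ltn_trans hu hx)) => [h|/existsP [y /andP[yW /andP[eyu _]]]].
      by rewrite h in uW.
    by move/existsP: unb; apply; exists y; rewrite yW eyu.
  apply/negP => /existsP [y /andP[/andP[yW _] eyu]].
  by move/existsP: unb; apply; exists y; rewrite yW eyu.
rewrite !inE negb_and; case evx: (e v x) => //=.
move: vR; rewrite inRest => /andP[vW vnb].
case: (char x hx) => [xW|/existsP [y /andP[yW /andP[eyx lt]]]].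
  by move/existsP: vnb; case; exists x; rewrite xW e_sym evx.
by rewrite leqnn /= negbK; apply/existsP; exists y; rewrite lt eyx !andbT.
Qed.
Unset Implicit Arguments.

Theorem lemma1 (R : realType) (T : finType) (e : rel T)
  (e_sym : symmetric e) (e_irr : irreflexive e) (l d : R)
  (hl : 0 < l) (hd : 0 < d) (hdn : d <= #|T|%:R) :
  let good (s : {perm T}) :=
    let W := lfmis e s (vprefix s (l / d)) in
    let Rest := ~: (W :|: nbhd e W) in
    [forall v in Rest, (#|[set u in Rest | e v u]|%:R <= d)] in
  1 - #|T|%:R / expR l <= #|[set s : {perm T} | good s]|%:R / (#|T|`!)%:R.
Proof.
pose good (s : {perm T}) :=
    let W := lfmis e s (vprefix s (l / d)) in
    let Rest := ~: (W :|: nbhd e W) in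
    [forall v in Rest, (#|[set u in Rest | e v u]|%:R <= d)].
change (1 - #|T|%:R / expR l <= #|[set s : {perm T} | good s]|%:R / (#|T|`!)%:R).
set n := #|T|.
set L := l / d.
pose m := (Num.truncn d).+1.
have hdm : d <= m%:R by apply: ltW; apply: truncnS_gt.
have hm : forall a : nat, d < a%:R -> (m <= a)%N.
  by move=> a ha; rewrite /m truncn_lt_nat // ltW.
pose P j := (n <= j)%N || (L * n%:R <= j%:R).
have exP : exists j, P j by exists n; rewrite /P leqnn.
case: (ex_minnP exP) => k0 Pk0 kmin.
have hk0 : (k0 <= n)%N by apply: kmin; rewrite /P leqnn.
have hk : forall (s : {perm T}) x, (pos s x < k0)%N -> x \in vprefix s L.
  move=> s x hx; rewrite inE.
  have : ~~ P (pos s x) by apply/negP => /kmin; rewrite leqNgt hx.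
  by rewrite /P negb_or -ltNge => /andP[_ h].
have hv : forall v, #|[set s | Bp e L v m k0 s]|%:R <= (n`!)%:R * expR (- l).
  move=> v; apply: (le_trans (iterB e_irr L v m hk0)).
  apply: ler_wpM2l => //; apply: (prod_bound (d := d)) => //.
have hbad : (#|[set s | ~~ good s]| <= \sum_(v : T) #|[set s | Bp e L v m k0 s]|)%N.
  rewrite -sum_ind.
  under [X in (_ <= X)%N]eq_bigr => v _ do rewrite -sum_ind.
  rewrite exchange_big /=; apply: leq_sum => s _.
  case gs: (good s) => //=.
  move: gs; rewrite /good => /negbT /forallPn [v].
  rewrite negb_imply => /andP[vR hv'].
  rewrite -ltNge in hv'.
  rewrite (bigD1 v) //= (bad_B e_sym e_irr (L := L) (hk s) hm vR hv').
  by [].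
have hc : (#|[set s | good s]| = n`! - #|[set s | ~~ good s]|)%N.
  rewrite -card_perms -(cardsC [set s | good s]).
  rewrite (_ : ~: [set s | good s] = [set s | ~~ good s]) ?addnK //.
  by apply/setP => s; rewrite !inE.
have hfpos : 0 < (n`!)%:R :> R by rewrite ltr0n fact_gt0.
rewrite hc natrB; last by rewrite -card_perms max_card.
rewrite mulrBl divff ?gt_eqF // lerD2l lerN2 ler_pdivrMr //.
apply: (le_trans (y := (\sum_(v : T) #|[set s | Bp e L v m k0 s]|)%:R)).
  by rewrite ler_nat.
rewrite natr_sum; apply: (le_trans (ler_sum _ (fun v _ => hv v))).
rewrite sumr_const -/n -[X in X <= _]mulr_natr expRN.
by rewrite le_eqVlt; apply/orP; left; apply/eqP; ring.
Qed.
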